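(* A bipartite graph $G$ satisfies $\mathrm{diss}(G)=\alpha(G)$ if and only if there is no induced matching $N$ in $G$ such that every maximum matching of $G$ contains at least one edge of $N$.
   Context: All graphs are finite, simple and undirected. A set $I$ of vertices of a graph $G$ is a dissociation set if the induced subgraph $G[I]$ has maximum degree at most $1$; $\mathrm{diss}(G)$ is the maximum order of a dissociation set in $G$. $\alpha(G)$ is the independence number. An induced matching is a matching $N$ such that the subgraph of $G$ induced by the vertices covered by $N$ has edge set exactly $N$. *)

(* Defs.v *)
From mathcomp Require Import all_boot.
Set Implicit Arguments. Unset Strict Implicit. Unset Printing Implicit Defensive.

Definition simple_graph (T : finType) (e : rel T) : Prop :=
  symmetric e /\ irreflexive e.

Definition bipartite (T : finType) (e : rel T) : Prop :=
  exists c : T -> bool, forall x y, e x y -> c x != c y.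

Definition independent (T : finType) (e : rel T) (I : {set T}) : bool :=
  [forall x in I, forall y in I, ~~ e x y].

Definition dissociation (T : finType) (e : rel T) (I : {set T}) : bool :=
  [forall x in I, #|[set y in I | e x y]| <= 1].

Definition alpha (T : finType) (e : rel T) : nat :=
  \max_(I : {set T} | independent e I) #|I|.

Definition diss (T : finType) (e : rel T) : nat :=
  \max_(I : {set T} | dissociation e I) #|I|.

Definition is_edge (T : finType) (e : rel T) (f : {set T}) : bool :=
  [exists u, exists v, e u v && (f == [set u; v])].

Definition matching (T : finType) (e : rel T) (M : {set {set T}}) : bool :=
  [forall f in M, is_edge e f] &&
  [forall f in M, forall g in M, (f != g) ==> [disjoint f & g]].

Definition maximum_matching (T : finType) (e : rel T) (M : {set {set T}}) : bool :=
  matching e M && [forall M' : {set {set T}}, matching e M' ==> (#|M'| <= #|M|)].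

Definition induced_matching (T : finType) (e : rel T) (N : {set {set T}}) : bool :=
  matching e N &&
  [forall u in cover N, forall v in cover N, e u v ==> ([set u; v] \in N)].

(* Main.v *)
Require Import Defs.
From mathcomp Require Import all_boot.
From mathcomp Require Import zify.
Set Implicit Arguments. Unset Strict Implicit. Unset Printing Implicit Defensive.

Section Hall.
Variables (L Rt : finType).

Definition nbh (R : L -> Rt -> bool) (S : {set L}) : {set Rt} :=
  [set y | [exists x in S, R x y]].

Definition hallc (R : L -> Rt -> bool) (A : {set L}) := forall S : {set L}, S \subset A -> #|S| <= #|nbh R S|.

Definition hsol (R : L -> Rt -> bool) (A : {set L}) (f : L -> option Rt) :=
  (forall x, x \in A -> exists2 y, f x = Some y & R x y) /\
  (forall x x', x \in A -> x' \in A -> f x = f x' -> x = x').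

Lemma nbhP (R : L -> Rt -> bool) (S : {set L}) y : reflect (exists2 x, x \in S & R x y) (y \in nbh R S).
Proof.
rewrite inE; apply: (iffP existsP) => [[x /andP[]]|[x xS Rxy]]; first by exists x.
by exists x; rewrite xS.
Qed.

Lemma hall_ind n : forall (R : L -> Rt -> bool) (A : {set L}), #|A| <= n -> hallc R A -> exists f, hsol R A f.
Proof.
elim: n => [|n IH] R A hA hc.
  exists (fun _ => None); split=> x; move: hA; rewrite leqn0 => /eqP/cards0_eq ->;
    by rewrite inE.
case: (set_0Vmem A) => [->|[a aA]].
  by exists (fun _ => None); split=> x; rewrite inE.
case: (boolP [exists S : {set L}, [&& S \proper A, S != set0 & #|nbh R S| <= #|S|]]).
- case/existsP => S /and3P[pSA nS0 hS].
  have sSA := proper_sub pSA.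
  have [f1 [f1a f1b]] : exists f, hsol R S f.
    apply: IH; first by have := proper_card pSA; lia.
    by move=> U sU; apply: hc; exact: subset_trans sU sSA.
  pose R2 := fun x y => R x y && (y \notin nbh R S).
  have [f2 [f2a f2b]] : exists f, hsol R2 (A :\: S) f.
    apply: IH.
      rewrite cardsDS //; have : 0 < #|S| by rewrite card_gt0.
      by have := subset_leq_card sSA; lia.
    move=> U sU.
    have sUA : U \subset A by exact: subset_trans sU (subsetDl A S).
    have := hc (U :|: S); rewrite subUset sUA sSA => /(_ isT).
    have -> : #|U :|: S| = #|U| + #|S|.
      rewrite cardsU; suff -> : U :&: S = set0 by rewrite cards0 subn0.
      apply/setP=> x; rewrite !inE; apply/negP=> /andP[xU xS].
      by move: (subsetP sU x xU); rewrite inE xS.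
    have := cardsUI (nbh R2 U) (nbh R S).
    have : #|nbh R (U :|: S)| <= #|nbh R2 U :|: nbh R S|.
      apply: subset_leq_card.
      apply/subsetP=> y /nbhP[x]; rewrite inE => /orP[] xs Rxy; rewrite in_setU.
        case: (boolP (y \in nbh R S)) => yS; rewrite ?orbT // orbF; apply/nbhP; exists x => //.
        by rewrite /R2 Rxy yS.
      by apply/orP; right; apply/nbhP; exists x.
    lia.
  exists (fun x => if x \in S then f1 x else f2 x); split.
    move=> x xA; case: ifP => xS; first exact: f1a.
    have [y f2y /andP[Rxy _]] := f2a x ltac:(by rewrite inE xS).
    by exists y.
  move=> x x' xA x'A; case: ifP => xS; case: ifP => x'S.
  + exact: f1b.
  + have [y fy Rxy] := f1a x xS.
    have [y' fy' /andP[_ ny']] := f2a x' ltac:(by rewrite inE x'S).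
    rewrite fy fy' => -[eyy]; move: ny'; rewrite -eyy.
    by move/negP; case; apply/nbhP; exists x.
  + have [y fy Rxy] := f1a x' x'S.
    have [y' fy' /andP[_ ny']] := f2a x ltac:(by rewrite inE xS).
    rewrite fy fy' => -[eyy]; move: ny'; rewrite eyy.
    by move/negP; case; apply/nbhP; exists x'.
  + by apply: f2b; rewrite inE ?xS ?x'S.
- move=> hn.
  have [b Rab] : exists b, R a b.
    have := hc [set a]; rewrite sub1set aA cards1 => /(_ isT).
    rewrite card_gt0 => /set0Pn[b /nbhP[x]]; rewrite inE => /eqP-> Rab.
    by exists b.
  pose R2 := fun x y => R x y && (y != b).
  have [f2 [f2a f2b]] : exists f, hsol R2 (A :\ a) f.
    apply: IH; first by move: hA; rewrite (cardsD1 a A) aA; lia.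
    move=> U sU.
    case: (set_0Vmem U) => [->|[u uU]]; first by rewrite cards0.
    have pUA : U \proper A.
      apply/properP; split; first exact: subset_trans sU (subsetDl _ _).
      exists a => //; apply/negP=> aU; move: (subsetP sU a aU).
      by rewrite !inE eqxx.
    have : #|U| < #|nbh R U|.
      have nU : U != set0 by apply/set0Pn; exists u.
      by have := existsPn hn U; rewrite pUA nU /= -ltnNge.
    have : #|nbh R U| <= #|b |: nbh R2 U|.
      apply: subset_leq_card; apply/subsetP=> y /nbhP[x xU Rxy].
      rewrite in_setU1; case: (boolP (y == b)) => //= yb.
      by apply/nbhP; exists x => //; rewrite /R2 Rxy.
    rewrite cardsU1; lia.
  exists (fun x => if x == a then Some b else f2 x); split.
    move=> x xA; case: ifP => [/eqP->|xa]; first by exists b.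
    have [y f2y /andP[Rxy _]] := f2a x ltac:(by rewrite !inE xa).
    by exists y.
  move=> x x' xA x'A; case: ifP => [/eqP->|xa]; case: ifP => [/eqP->|x'a] //.
  + have [y' fy' /andP[_ ny']] := f2a x' ltac:(by rewrite !inE x'a).
    by rewrite fy' => -[eb]; move: ny'; rewrite eb eqxx.
  + have [y' fy' /andP[_ ny']] := f2a x ltac:(by rewrite !inE xa).
    by rewrite fy' => -[eb]; move: ny'; rewrite eb eqxx.
  + by apply: f2b; rewrite !inE ?xa ?x'a.
Qed.

Lemma hall (R : L -> Rt -> bool) (A : {set L}) : hallc R A -> exists f, hsol R A f.
Proof. exact: (@hall_ind #|A|). Qed.

End Hall.

Lemma cardsU0 (T : finType) (X Y : {set T}) :
  (forall z, z \in X -> z \in Y -> False) -> #|X :|: Y| = #|X| + #|Y|.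
Proof.
move=> h; rewrite cardsU; suff -> : X :&: Y = set0 by rewrite cards0 subn0.
by apply/setP=> z; rewrite !inE; apply/negP => /andP[a b]; exact: h z a b.
Qed.

Section Konig.
Variables (T : finType) (e : rel T) (c : T -> bool).
Hypothesis esym : symmetric e.
Hypothesis ec : forall x y, e x y -> c x != c y.

Lemma konig : exists J M, independent e J /\ matching e M /\ #|T| <= #|J| + #|M|.
Proof.
pose A := [set x | ~~ c x].
pose nb (S : {set T}) := nbh e S.
pose K (S : {set T}) := #|S| + #|~: nb S|.
have := @arg_maxnP _ set0 (fun S : {set T} => S \subset A) K (sub0set _).
case=> S0 S0A hmax.
have hnb S y : y \in nb S -> S \subset A -> c y.
  move=> /nbhP[x xS exy] SA; have := ec exy; have := subsetP SA x xS.
  by rewrite inE; case: (c x); case: (c y).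
have cT S : #|nb S| + #|~: nb S| = #|T| by rewrite cardsC.
have K0 : #|T| <= K S0.
  have := hmax set0 (sub0set _); rewrite /K cards0 add0n.
  suff -> : nb set0 = set0 by rewrite setC0 cardsT.
  by apply/setP=> y; rewrite in_set0; apply/negP=> /nbhP[x]; rewrite in_set0.
pose d := K S0 - #|T|.
pose Rt := (T + 'I_d)%type.
pose R (x : T) (y : Rt) := match y with inl y => e x y | inr _ => true end.
have hc : hallc R A.
  move=> S SA; case: (set_0Vmem S) => [->|[s sS]]; first by rewrite cards0.
  have : #|[set inl y | y in nb S] :|: [set inr i | i : 'I_d]| <= #|nbh R S|.
    apply: subset_leq_card; apply/subsetP=> y; rewrite in_setU.
    case/orP=> /imsetP[z zz ->]; apply/nbhP.
      by case/nbhP: zz => x xS exz; exists x.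
    by exists s.
  rewrite cardsU0; last first.
    by move=> z /imsetP[? _ ->] /imsetP[].
  rewrite !card_imset; try exact: inl_inj; last by move=> i j [].
  rewrite card_ord.
  have hS : K S <= K S0 := hmax S SA.
  have := cT S; have := cT S0; rewrite /d /K in K0 hS *; lia.
have [f [fa fb]] := hall hc.
pose S' := [set x in A | if f x is Some (inl _) then true else false].
have hS' : #|A| <= #|S'| + d.
  have := cardsID S' A.
  have : #|A :\: S'| <= d.
    rewrite -(card_in_imset (f := f)); last first.
      by move=> x y /setDP[xA _] /setDP[yA _]; apply: fb.
    have cD : #|[set (Some (inr i) : option Rt) | i : 'I_d]| = d.
      by rewrite card_imset ?cardsT ?card_ord // => i j [].
    apply: leq_trans (_ : _ <= #|[set (Some (inr i) : option Rt) | i : 'I_d]|) _;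
      last by rewrite cD.
    apply: subset_leq_card; apply/subsetP=> o /imsetP[x /setDP[xA xn] ->].
    have [y fy _] := fa x xA.
    move: xn; rewrite inE xA fy /=; case: y fy => // i _ _.
    by apply/imsetP; exists i.
  have : #|A :&: S'| <= #|S'| by apply: subset_leq_card; apply: subsetIr.
  lia.
pose g x := if f x is Some (inl y) then y else x.
have gS x : x \in S' -> [/\ f x = Some (inl (g x)), e x (g x), ~~ c x & c (g x)].
  rewrite inE => /andP[xA]; have [y fy Rxy] := fa x xA.
  rewrite /g fy; case: y fy Rxy => // y fy exy _.
  move: xA; rewrite inE => cx; split=> //.
  by have := ec exy; move: cx; case: (c x); case: (c y).
pose M := [set [set x; g x] | x in S'].
have cM : #|M| = #|S'|.
  apply: card_in_imset => x y xS yS exy.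
  have [_ _ cx cgx] := gS x xS; have [_ _ cy cgy] := gS y yS.
  have : x \in [set y; g y] by rewrite -exy set21.
  rewrite !inE => /orP[/eqP //|/eqP xg].
  by move: cx; rewrite xg cgy.
pose J := S0 :|: ~: (nb S0 :|: A).
exists J, M; split; [|split].
- apply/forallP=> x; apply/implyP=> xJ; apply/forallP=> y; apply/implyP=> yJ.
  apply/negP=> exy; have := ec exy.
  move: xJ yJ; rewrite /J !in_setU !in_setC !in_setU !negb_or.
  case/orP=> [xS|/andP[xn xA]]; case/orP=> [yS|/andP[yn yA]].
  + by move: (subsetP S0A x xS) (subsetP S0A y yS); rewrite !inE; 
      case: (c x); case: (c y).
  + by move=> _; apply: (negP yn); apply/nbhP; exists x.
  + by move=> _; apply: (negP xn); apply/nbhP; exists y; rewrite // esym.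
  + by move: xA yA; rewrite !inE !negbK => -> ->.
- apply/andP; split.
    apply/forallP=> h; apply/implyP=> /imsetP[x xS ->].
    have [_ exg _ _] := gS x xS.
    by apply/existsP; exists x; apply/existsP; exists (g x); rewrite exg eqxx.
  apply/forallP=> h; apply/implyP=> /imsetP[x xS ->].
  apply/forallP=> h'; apply/implyP=> /imsetP[y yS ->].
  apply/implyP=> nxy; rewrite -setI_eq0; apply/eqP/setP=> z; rewrite !inE.
  apply/negP=> /andP[zx zy].
  have [fx _ cx cgx] := gS x xS; have [fy _ cy cgy] := gS y yS.
  move/negP: nxy; apply.
  suff -> : x = y by [].
  move: zx zy => /orP[]/eqP-> /orP[]/eqP.
  + by [].
  + by move=> hh; move: cx; rewrite hh cgy.
  + by move=> hh; move: cy; rewrite -hh cgx.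
  + move=> hh; apply: fb; [move: xS | move: yS | by rewrite fx fy hh];
      by rewrite inE => /andP[].
- have h1 : #|J| = #|S0| + #|~: (nb S0 :|: A)|.
    apply: cardsU0 => z zS; rewrite in_setC in_setU (subsetP S0A z zS) orbT.
    by [].
  have h2 : #|nb S0 :|: A| = #|nb S0| + #|A|.
    apply: cardsU0 => z zn; rewrite inE => cz.
    by move: (hnb S0 z zn S0A); move: cz; case: (c z).
  have := cardsC (nb S0 :|: A); have := cT S0.
  rewrite /d /K in K0 hS' *. move: cM h1 h2 K0 hS'. clear. set t := #|T|. set m := #|M|. set j := #|J|. set a := #|A|. set s := #|S'|. set u := #|~: nb S0|. set v := #|nb S0|. set w := #|S0|. set p := #|~: (nb S0 :|: A)|. set q := #|nb S0 :|: A|. clearbody t m j a s u v w p q. lia.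
Qed.
End Konig.

Lemma match_bound (T : finType) (M : {set {set T}}) (I : {set T}) :
  (forall f g, f \in M -> g \in M -> f != g -> [disjoint f & g]) ->
  (forall f, f \in M -> exists2 x, x \in f & x \notin I) ->
  #|M| + #|I| <= #|T|.
Proof.
move=> hd hx.
pose p (f : {set T}) := [pick x in f :\: I].
have pS f : f \in M -> exists2 x, p f = Some x & x \in f :\: I.
  move=> fM; rewrite /p; case: pickP => [x xf|h]; first by exists x.
  by have [x xf xI] := hx f fM; move: (h x); rewrite inE xf xI.
have : #|[set p f | f in M]| <= #|[set Some x | x in ~: I]|.
  apply: subset_leq_card; apply/subsetP=> o /imsetP[f fM ->].
  have [x -> /setDP[_ xI]] := pS f fM.
  by apply/imsetP; exists x; rewrite ?inE.
rewrite (card_in_imset (f := p)); last first.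
  move=> f g fM gM; have [x -> /setDP[xf _]] := pS f fM.
  have [y -> /setDP[yg _]] := pS g gM => -[xy].
  apply/eqP; apply/negPn/negP=> /(hd f g fM gM)/disjoint_setI0/setP/(_ x).
  by rewrite !inE xf xy yg.
rewrite card_imset; last by move=> x y [].
have := cardsC I; set b := #|~: I|; set t := #|T|; set m := #|M|; set i := #|I|. clearbody b t m i. lia.
Qed.

Section Main.
Variables (T : finType) (e : rel T).
Hypothesis esym : symmetric e.
Hypothesis eirr : irreflexive e.

Lemma matching_disj M : matching e M ->
  forall f g, f \in M -> g \in M -> f != g -> [disjoint f & g].
Proof.
case/andP=> _ /forallP h f g fM gM fg.
by move: (h f); rewrite fM /= => /forallP/(_ g); rewrite gM fg.
Qed.

Lemma matching_edge M f : matching e M -> f \in M -> exists u v, e u v /\ f = [set u; v].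
Proof.
case/andP=> /forallP h _ fM; move: (h f); rewrite fM /=.
by case/existsP=> u /existsP[v /andP[euv /eqP ->]]; exists u, v.
Qed.

Lemma edge_at u v z : e u v -> z \in [set u; v] ->
  exists y, [set u; v] = [set z; y] /\ e z y.
Proof.
move=> euv; rewrite !inE => /orP[]/eqP->; first by exists v.
by exists u; rewrite setUC esym.
Qed.

Lemma card_le1_eq (X : {set T}) y1 y2 : #|X| <= 1 -> y1 \in X -> y2 \in X -> y1 = y2.
Proof.
move=> h1 h2 h3; apply/eqP/negPn/negP=> ne.
have : #|[set y1; y2]| <= #|X|.
  by apply: subset_leq_card; apply/subsetP=> z; rewrite !inE => /orP[]/eqP->.
by rewrite cards2 ne; move: h1; case: #|X| => [|[]].
Qed.

Lemma alpha_bound M : matching e M -> alpha e + #|M| <= #|T|.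
Proof.
move=> mM.
have : alpha e <= #|T| - #|M|.
  apply/bigmax_leqP=> I indI.
  have := match_bound (matching_disj mM) (I := I).
  have hx : forall f, f \in M -> exists2 x, x \in f & x \notin I.
    move=> f fM; have [u [v [euv ->]]] := matching_edge mM fM.
    case: (boolP (u \in I)) => uI; last by exists u; rewrite // !inE eqxx.
    case: (boolP (v \in I)) => vI; last by exists v; rewrite // !inE eqxx orbT.
    move/forallP: indI => /(_ u); rewrite uI => /forallP/(_ v).
    by rewrite vI euv.
  move=> /(_ hx); set t := #|T|; set m := #|M|; set i := #|I|; clearbody t m i; lia.
have : #|M| <= #|T|.
  have := match_bound (matching_disj mM) (I := set0).
  rewrite cards0 addn0; apply=> f fM; have [u [v [euv ->]]] := matching_edge mM fM.
  by exists u; rewrite ?inE ?eqxx.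
set t := #|T|; set m := #|M|; set a := alpha e; clearbody t m a; lia.
Qed.

Lemma alpha_le_diss : alpha e <= diss e.
Proof.
apply/bigmax_leqP=> I indI; rewrite /diss; apply: (leq_bigmax_cond (F := fun I : {set T} => #|I|)).
apply/forallP=> x; apply/implyP=> xI.
suff -> : [set y in I | e x y] = set0 by rewrite cards0.
apply/setP=> y; rewrite !inE; apply/negP=> /andP[yI exy].
move/forallP: indI => /(_ x); rewrite xI => /forallP/(_ y).
by rewrite yI exy.
Qed.

End Main.

Unset Implicit Arguments.
Theorem mainTheorem7 (T : finType) (e : rel T) :
  simple_graph e -> bipartite e ->
  (diss e = alpha e <->
   ~ (exists N : {set {set T}}, induced_matching e N /\
        forall M : {set {set T}}, maximum_matching e M ->
          exists2 f, f \in N & f \in M)).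
Proof.
case=> esym eirr [c ec]; split.
- move=> hde [N [indN hN]].
  case/andP: indN => mN _.
  pose e' := fun u v => e u v && ([set u; v] \notin N).
  have e'sym : symmetric e'.
    by move=> u v; rewrite /e' esym setUC.
  have e'c : forall x y, e' x y -> c x != c y.
    by move=> x y /andP[/ec].
  have [J [M' [indJ [mM' hT]]]] := @konig _ e' c e'sym e'c.
  have mM'e : matching e M'.
    case/andP: mM' => /forallP h1 h2; apply/andP; split=> //.
    apply/forallP=> f; apply/implyP=> fM; move: (h1 f); rewrite fM /=.
    case/existsP=> u /existsP[v /andP[/andP[euv _] fe]].
    by apply/existsP; exists u; apply/existsP; exists v; rewrite euv.
  have : ~~ maximum_matching e M'.
    apply/negP=> /hN[f fN fM].
    have [u [v [euv fuv]]] := matching_edge mM' fM.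
    by move: euv; rewrite /e' -fuv fN andbF.
  rewrite /maximum_matching mM'e /= => /forallPn[M''].
  rewrite negb_imply -ltnNge => /andP[mM'' lt].
  have := alpha_bound mM''.
  have : #|J| <= diss e.
    rewrite /diss; apply: (leq_bigmax_cond (F := fun I : {set T} => #|I|)).
    apply/forallP=> x; apply/implyP=> xJ.
    case: (set_0Vmem [set y in J | e x y]) => [->|[y1 y1in]]; first by rewrite cards0.
    suff : [set y in J | e x y] \subset [set y1] by move/subset_leq_card; rewrite cards1.
    have key y : y \in [set y in J | e x y] -> [set x; y] \in N.
      rewrite inE => /andP[yJ exy]; move/forallP: indJ => /(_ x).
      rewrite xJ => /forallP/(_ y).
      by rewrite yJ /e' exy /= negbK.
    apply/subsetP=> y yin; rewrite inE.
    have k1 := key y yin; have k2 := key y1 y1in.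
    have : [set x; y] = [set x; y1].
      apply/eqP/negPn/negP=> ne.
      move: (matching_disj mN k1 k2 ne); rewrite -setI_eq0 => /eqP/setP/(_ x).
      by rewrite !inE !eqxx.
    move/setP/(_ y); rewrite !inE eqxx orbT => hy; move: (Logic.eq_sym hy) => /orP[/eqP yx|//].
    by move: yin; rewrite inE yx => /andP[_]; rewrite eirr.
  rewrite hde; move: hT lt; set t := #|T|; set j := #|J|; set m1 := #|M'|; set m2 := #|M''|.
  set a := alpha e; clearbody t j m1 m2 a; lia.
- move=> hno; apply/eqP; rewrite eqn_leq alpha_le_diss andbT.
  apply/bigmax_leqP=> I dI.
  pose N := [set f : {set T} | is_edge e f && (f \subset I)].
  have dI1 x : x \in I -> forall y1 y2, y1 \in I -> y2 \in I -> e x y1 -> e x y2 -> y1 = y2.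
    move=> xI y1 y2 y1I y2I e1 e2; move/forallP: dI => /(_ x); rewrite xI => /= h.
    by apply: (card_le1_eq h); rewrite inE ?y1I ?y2I.
  have indN : induced_matching e N.
    apply/andP; split; [apply/andP; split|].
    + by apply/forallP=> f; apply/implyP; rewrite inE => /andP[].
    + apply/forallP=> f; apply/implyP=> fN; apply/forallP=> g; apply/implyP=> gN.
      apply/implyP=> fg; rewrite -setI_eq0; apply/negPn/negP.
      case/set0Pn=> z; rewrite inE => /andP[zf zg].
      move: fN gN; rewrite !inE => /andP[/existsP[u /existsP[v /andP[euv /eqP fe]]] fI].
      case/andP=> [/existsP[u' /existsP[v' /andP[euv' /eqP ge]]] gI].
      have [y1 [f1 ey1]] := edge_at esym euv (z := z) ltac:(by rewrite -fe).
      have [y2 [g1 ey2]] := edge_at esym euv' (z := z) ltac:(by rewrite -ge).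
      rewrite fe f1 in fg fI; rewrite ge g1 in fg gI.
      have zI : z \in I by apply: (subsetP fI); rewrite !inE eqxx.
      have y1I : y1 \in I by apply: (subsetP fI); rewrite !inE eqxx orbT.
      have y2I : y2 \in I by apply: (subsetP gI); rewrite !inE eqxx orbT.
      by move: fg; rewrite (dI1 z zI y1 y2 y1I y2I ey1 ey2) eqxx.
    + have cI u : u \in cover N -> u \in I.
        rewrite /cover => /bigcupP[f]; rewrite inE => /andP[_ fI] uf.
        exact: (subsetP fI).
      apply/forallP=> u; apply/implyP=> uN; apply/forallP=> v; apply/implyP=> vN.
      apply/implyP=> euv; rewrite inE; apply/andP; split.
        by apply/existsP; exists u; apply/existsP; exists v; rewrite euv eqxx.
      by apply/subsetP=> z; rewrite !inE => /orP[]/eqP->; apply: cI.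
  case: (boolP [exists M, maximum_matching e M && [forall f in M, f \notin N]]).
  + case/existsP=> M /andP[maxM /forallP hM].
    case/andP: (maxM) => mM /forallP hmax.
    have hx : forall f, f \in M -> exists2 x, x \in f & x \notin I.
      move=> f fM; move: (hM f); rewrite fM /= inE negb_and.
      case/orP=> [ne|/subsetPn[x xf xI]]; last by exists x.
      have [u [v [euv fe]]] := matching_edge mM fM.
      by move: ne; rewrite fe; move/negP; case; apply/existsP; exists u;
        apply/existsP; exists v; rewrite euv eqxx.
    have b1 := match_bound (matching_disj mM) hx.
    have [J [M' [indJ [mM' hT]]]] := @konig _ e c esym ec.
    have := hmax M'; rewrite mM' /= => b2.
    have b3 : #|J| <= alpha e.
      by rewrite /alpha; apply: (leq_bigmax_cond (F := fun I : {set T} => #|I|)).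
    move: b1 b2 b3 hT; set t := #|T|; set j := #|J|; set m1 := #|M'|; set m := #|M|.
    set a := alpha e; set i := #|I|; clearbody t j m1 m a i; lia.
  + move=> hn; exfalso; apply: hno; exists N; split=> // M maxM.
    move/existsPn: hn => /(_ M); rewrite maxM /= => /forallPn[f].
    by rewrite negb_imply negbK => /andP[fM fN]; exists f.
Qed.
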